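(* Let $p_1,\dots,p_n\ge0$ with $\sum_ip_i=1$, integers $d_i\ge1$ with $\sum_ip_id_i>1$. For $\lambda\in(0,1)$ let $\bar F_\lambda$ solve $\bar F'(w)=\lambda\sum_{i=1}^np_i\bar F(w)^{d_i}-\bar F(w)$, $\bar F(0)=\lambda$. Define $\mathbb E[W^{(i)}_\lambda]=\int_0^\infty\bar F_\lambda(w)^{d_i}dw$, $\mathbb E[W_\lambda]=\sum_ip_i\mathbb E[W^{(i)}_\lambda]$, $\mathbb E[R^{(i)}_\lambda]=1+\mathbb E[W^{(i)}_\lambda]$, $\mathbb E[R_\lambda]=1+\mathbb E[W_\lambda]$. Then for every $i$, $$\lim_{\lambda\to1^-}-\frac{\mathbb E[R^{(i)}_\lambda]}{\log(1-\lambda)}=\lim_{\lambda\to1^-}-\frac{\mathbb E[R_\lambda]}{\log(1-\lambda)}=\lim_{\lambda\to1^-}-\frac{\mathbb E[W^{(i)}_\lambda]}{\log(1-\lambda)}=\lim_{\lambda\to1^-}-\frac{\mathbb E[W_\lambda]}{\log(1-\lambda)}=\frac1{\sum_{i=1}^np_id_i-1}.$$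
   Context: This models the LL($d_1,\dots,d_n,p_1,\dots,p_n$) policy: with probability $p_i$ a job is sent to the least loaded of $d_i$ randomly sampled servers; job sizes exponential with mean 1. *)

(* Defs.v *)
From Stdlib Require Import Reals.
From Coquelicot Require Import Coquelicot.
Open Scope R_scope.

Fixpoint sumR (n : nat) (f : nat -> R) : R :=
  match n with
  | O => 0
  | S k => sumR k f + f k
  end.

Definition solves_ode (n : nat) (p : nat -> R) (d : nat -> nat) (lam : R)
  (F : R -> R) : Prop :=
  F 0 = lam /\
  filterlim F (at_right 0) (locally lam) /\
  (forall w, 0 < w ->
     is_derive F w (lam * sumR n (fun i => p i * F w ^ d i) - F w)).

Definition EWi (F : R -> R) (di : nat) : R :=
  RInt_gen (fun w => F w ^ di) (at_point 0) (Rbar_locally p_infty).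

Definition EW (n : nat) (p : nat -> R) (d : nat -> nat) (F : R -> R) : R :=
  sumR n (fun i => p i * EWi F (d i)).

Definition ERi (F : R -> R) (di : nat) : R := 1 + EWi F di.
Definition ER (n : nat) (p : nat -> R) (d : nat -> nat) (F : R -> R) : R :=
  1 + EW n p d F.

(* Main.v *)
Require Import Defs.
From Stdlib Require Import Reals Lra Lia Classical.
From Coquelicot Require Import Coquelicot.
Open Scope R_scope.

Lemma dmul f g x df dg : is_derive f x df -> is_derive g x dg ->
  is_derive (fun t => f t * g t) x (df * g x + f x * dg).
Proof. intros H1 H2. apply (is_derive_mult f g x df dg H1 H2). intros; apply Rmult_comm. Qed.

Lemma dplus f g x df dg : is_derive f x df -> is_derive g x dg ->
  is_derive (fun t => f t + g t) x (df + dg).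
Proof. intros H1 H2. apply (is_derive_plus f g x df dg H1 H2). Qed.

Lemma dminus f g x df dg : is_derive f x df -> is_derive g x dg ->
  is_derive (fun t => f t - g t) x (df - dg).
Proof. intros H1 H2. apply (is_derive_minus f g x df dg H1 H2). Qed.

Lemma dconst (a x : R) : @is_derive R_AbsRing R_NormedModule (fun _ : R => a) x 0.
Proof. apply (is_derive_const a x). Qed.

Lemma did (x : R) : @is_derive R_AbsRing R_NormedModule (fun t : R => t) x 1.
Proof. apply (is_derive_id x). Qed.

Lemma dcomp (f g : R -> R) x df dg : is_derive f (g x) df -> is_derive g x dg ->
  is_derive (fun t => f (g t)) x (dg * df).
Proof. intros H1 H2. apply (is_derive_comp f g x df dg H1 H2). Qed.

Lemma dval (f : R -> R) (x l l' : R) : is_derive f x l -> l = l' -> is_derive f x l'.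
Proof. intros H ->; exact H. Qed.

Lemma dext (f g : R -> R) (x l : R) : (forall t, f t = g t) -> is_derive f x l -> is_derive g x l.
Proof. intros H1 H2. apply (is_derive_ext f g x l H1 H2). Qed.

Lemma cont_mul (f g : R -> R) x : continuous f x -> continuous g x -> continuous (fun t => f t * g t) x.
Proof. intros H1 H2. apply (continuous_mult f g x H1 H2). Qed.
Lemma cont_plus (f g : R -> R) x : continuous f x -> continuous g x -> continuous (fun t => f t + g t) x.
Proof. intros H1 H2. apply (continuous_plus f g x H1 H2). Qed.
Lemma cont_const (c x : R) : continuous (fun _ => c) x.
Proof. apply continuous_const. Qed.
Lemma cont_pow (f : R -> R) k x : continuous f x -> continuous (fun t => f t ^ k) x.
Proof. intros H. induction k as [|k IH]; simpl. apply cont_const. apply cont_mul; auto. Qed.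

Lemma deriv_cont (f : R -> R) (x l : R) : is_derive f x l -> continuous f x.
Proof. intros H. apply (@ex_derive_continuous R_AbsRing R_NormedModule). exists l. exact H. Qed.

Lemma incr_lemma (f df : R -> R) (a b : R) : a <= b ->
  (forall x, a <= x <= b -> is_derive f x (df x)) ->
  (forall x, a <= x <= b -> 0 <= df x) -> f a <= f b.
Proof.
  intros Hab Hd Hp.
  destruct (MVT_gen f a b df) as [c [Hc Heq]].
  - intros x Hx. apply Hd. rewrite Rmin_left in Hx by lra. rewrite Rmax_right in Hx by lra. lra.
  - intros x Hx. apply continuity_pt_filterlim. apply (deriv_cont f x (df x)). apply Hd.
    rewrite Rmin_left in Hx by lra. rewrite Rmax_right in Hx by lra. lra.
  - rewrite Rmin_left in Hc by lra. rewrite Rmax_right in Hc by lra.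
    assert (0 <= df c * (b - a)) by (apply Rmult_le_pos; [apply Hp; lra| lra]). lra.
Qed.

Lemma decr_lemma (f df : R -> R) (a b : R) : a <= b ->
  (forall x, a <= x <= b -> is_derive f x (df x)) ->
  (forall x, a <= x <= b -> df x <= 0) -> f b <= f a.
Proof.
  intros Hab Hd Hp.
  assert (H : (fun t => - f t) a <= (fun t => - f t) b); [|simpl in H; lra].
  apply (incr_lemma (fun t => - f t) (fun t => - df t) a b Hab).
  - intros x Hx. apply (dext (fun t => 0 - f t)). intros; ring.
    apply (dval (fun t => 0 - f t) x (0 - df x)).
    + apply dminus. apply dconst. apply Hd; auto.
    + ring.
  - intros x Hx. specialize (Hp x Hx). lra.
Qed.

Lemma sumR_ext n f g : (forall i, (i < n)%nat -> f i = g i) -> sumR n f = sumR n g.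
Proof. induction n; simpl; intros H; auto. rewrite IHn by (intros; apply H; lia). rewrite H by lia. auto. Qed.
Lemma sumR_le n f g : (forall i, (i < n)%nat -> f i <= g i) -> sumR n f <= sumR n g.
Proof. induction n; simpl; intros H. lra. assert (f n <= g n) by (apply H; lia).
  assert (sumR n f <= sumR n g) by (apply IHn; intros; apply H; lia). lra. Qed.
Lemma sumR_plus n f g : sumR n (fun i => f i + g i) = sumR n f + sumR n g.
Proof. induction n; simpl. lra. rewrite IHn. ring. Qed.
Lemma sumR_scal n c f : sumR n (fun i => c * f i) = c * sumR n f.
Proof. induction n; simpl. ring. rewrite IHn. ring. Qed.
Lemma sumR_minus n f g : sumR n (fun i => f i - g i) = sumR n f - sumR n g.
Proof. induction n; simpl. lra. rewrite IHn. ring. Qed.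
Lemma sumR_cont n (G : nat -> R -> R) x : (forall i, (i < n)%nat -> continuous (G i) x) ->
  continuous (fun w => sumR n (fun i => G i w)) x.
Proof. induction n; simpl; intros H. apply cont_const. apply cont_plus.
  apply IHn; intros; apply H; lia. apply H; lia. Qed.

Lemma pow_mono_dec (x : R) (a b : nat) : 0 <= x <= 1 -> (a <= b)%nat -> x ^ b <= x ^ a.
Proof.
  intros Hx Hab. induction Hab. lra.
  simpl. assert (0 <= x ^ m) by (apply pow_le; lra).
  assert (x * x ^ m <= x ^ m) by nra. lra.
Qed.

Lemma pow_in01 (x : R) (k : nat) : 0 <= x <= 1 -> 0 <= x ^ k <= 1.
Proof. intros Hx. split. apply pow_le; lra. rewrite <- (pow1 k). apply pow_incr. lra. Qed.

Lemma ineq_a (x : R) (k : nat) : 0 <= x <= 1 ->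
  (1 - x) * x ^ k * INR k <= x - x ^ (S k).
Proof.
  intros Hx. induction k as [|k IH].
  - simpl. lra.
  - rewrite S_INR.
    assert (H1 : x ^ S k <= x ^ k) by (apply pow_mono_dec; auto).
    assert (H2 : x ^ S (S k) = x ^ S k * x) by (simpl; ring).
    assert (0 <= x ^ S k) by (apply pow_le; lra).
    assert (0 <= INR k) by apply pos_INR.
    assert ((1 - x) * x ^ S k * INR k <= (1 - x) * x ^ k * INR k).
    { apply Rmult_le_compat_r; auto. apply Rmult_le_compat_l; lra. }
    rewrite H2. nra.
Qed.

Lemma ineq_d (x : R) (k : nat) : 0 <= x <= 1 ->
  x - x ^ (S k) <= INR k * (1 - x).
Proof.
  intros Hx. assert (H : 1 - INR (S k) * (1 - x) <= x ^ S k).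
  { induction k as [|k IH].
    - simpl. lra.
    - rewrite !S_INR in *. assert (H2 : x ^ S (S k) = x * x ^ S k) by (simpl; ring).
      rewrite H2. assert (0 <= INR k) by apply pos_INR.
      assert (x * (1 - (INR k + 1) * (1 - x)) <= x * x ^ S k) by (apply Rmult_le_compat_l; lra).
      assert (0 <= (1 - x) * (1 - x) * (INR k + 1)) by (apply Rmult_le_pos; nra).
      nra. }
  rewrite S_INR in H. lra.
Qed.

Definition Sg (d : nat) (x : R) : R := sumR (Nat.pred d) (fun j => x ^ (S j)).

Lemma Sg_id (d : nat) (x : R) : (1 <= d)%nat -> x - x ^ d = (1 - x) * Sg d x.
Proof.
  intros Hd. destruct d as [|k]. lia. unfold Sg. simpl Nat.pred. clear Hd.
  induction k as [|k IH]. simpl. ring.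
  change (sumR (S k) (fun j => x ^ S j)) with (sumR k (fun j => x ^ S j) + x ^ S k).
  rewrite Rmult_plus_distr_l, <- IH. simpl. ring.
Qed.

Lemma Sg_nonneg (d : nat) (x : R) : 0 <= x -> 0 <= Sg d x.
Proof.
  intros Hx. unfold Sg. generalize (Nat.pred d). induction n. simpl; lra. change (sumR (S n) (fun j => x ^ S j)) with (sumR n (fun j => x ^ S j) + x ^ S n).
  assert (0 <= x ^ S n) by (apply pow_le; lra). lra.
Qed.

Lemma ineq_b (x : R) (k K : nat) : 0 <= x <= 1 -> (k <= K)%nat -> (1 <= K)%nat ->
  x * (1 - x) * INR k / INR K <= x - x ^ (S k).
Proof.
  intros Hx HkK HK.
  assert (HKp : 0 < INR K) by (apply lt_0_INR; lia).
  assert (Hle : INR k <= INR K) by (apply le_INR; auto).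
  destruct k as [|k].
  - simpl. unfold Rdiv. rewrite Rmult_0_r, Rmult_0_l. lra.
  - assert (H2 : x ^ S (S k) <= x ^ 2) by (apply pow_mono_dec; auto; lia).
    assert (x * (1 - x) * INR (S k) / INR K <= x * (1 - x)).
    { unfold Rdiv. rewrite Rmult_assoc. assert (0 <= x * (1 - x)) by nra.
      assert (INR (S k) * / INR K <= 1).
      { apply (Rmult_le_reg_r (INR K)); auto. rewrite Rmult_assoc, Rinv_l by lra. lra. }
      assert (0 <= INR (S k) * / INR K).
      { apply Rmult_le_pos. apply pos_INR. left; apply Rinv_0_lt_compat; auto. }
      nra. }
    assert (x ^ 2 = x * x) by ring. nra.
Qed.
Definition fp (n : nat) (p : nat -> R) (d : nat -> nat) (x : R) : R :=
  sumR n (fun i => p i * x ^ d i).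
Definition mm (n : nat) (p : nat -> R) (d : nat -> nat) : R :=
  sumR n (fun i => p i * INR (d i)).

Definition HypP (n : nat) (p : nat -> R) (d : nat -> nat) (K : nat) : Prop :=
  (forall i, (i < n)%nat -> 0 <= p i) /\ sumR n p = 1 /\
  (forall i, (i < n)%nat -> (1 <= d i)%nat /\ (d i <= K)%nat) /\ (1 <= K)%nat /\
  mm n p d > 1.

Lemma x_minus_fp n p d K x : HypP n p d K ->
  x - fp n p d x = sumR n (fun i => p i * (x - x ^ d i)).
Proof.
  intros [Hp [Hs _]]. unfold fp.
  rewrite (sumR_ext n (fun i => p i * (x - x ^ d i)) (fun i => x * p i - p i * x ^ d i)) by (intros; ring).
  rewrite sumR_minus, sumR_scal, Hs. ring.
Qed.

Lemma mm_minus1 n p d K : HypP n p d K ->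
  mm n p d - 1 = sumR n (fun i => p i * INR (Nat.pred (d i))).
Proof.
  intros [Hp [Hs [Hd _]]]. unfold mm.
  rewrite (sumR_ext n (fun i => p i * INR (Nat.pred (d i))) (fun i => p i * INR (d i) - 1 * p i)).
  rewrite sumR_minus, sumR_scal, Hs. ring.
  intros i Hi. destruct (Hd i Hi) as [H1 _]. destruct (d i) as [|k]. lia.
  simpl Nat.pred. rewrite S_INR. ring.
Qed.

Lemma S1 n p d K x : HypP n p d K -> 0 <= x <= 1 ->
  (1 - x) * x ^ K * (mm n p d - 1) <= x - fp n p d x.
Proof.
  intros H Hx. rewrite (x_minus_fp n p d K x H), (mm_minus1 n p d K H).
  destruct H as [Hp [Hs [Hd _]]].
  rewrite <- sumR_scal. apply sumR_le. intros i Hi.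
  destruct (Hd i Hi) as [H1 H2]. specialize (Hp i Hi).
  destruct (d i) as [|k] eqn:E. lia. simpl Nat.pred.
  assert (A := ineq_a x k Hx).
  assert (x ^ K <= x ^ k) by (apply pow_mono_dec; auto; lia).
  assert (0 <= INR k) by apply pos_INR.
  assert ((1 - x) * x ^ K * INR k <= (1 - x) * x ^ k * INR k).
  { apply Rmult_le_compat_r; auto. apply Rmult_le_compat_l; lra. }
  assert ((1 - x) * x ^ K * (p i * INR k) = p i * ((1 - x) * x ^ K * INR k)) by ring.
  rewrite H4. apply Rmult_le_compat_l; auto. lra.
Qed.

Lemma S2 n p d K x : HypP n p d K -> 0 <= x <= 1 ->
  x * (1 - x) * (mm n p d - 1) / INR K <= x - fp n p d x.
Proof.
  intros H Hx. rewrite (x_minus_fp n p d K x H), (mm_minus1 n p d K H).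
  destruct H as [Hp [Hs [Hd [HK _]]]].
  match goal with |- _ <= ?R => replace (x * (1 - x) * sumR n (fun i => p i * INR (Nat.pred (d i))) / INR K)
    with (sumR n (fun i => p i * (x * (1 - x) * INR (Nat.pred (d i)) / INR K))) end.
  2:{ rewrite (sumR_ext n _ (fun i => (x * (1 - x) / INR K) * (p i * INR (Nat.pred (d i))))) by (intros; unfold Rdiv; ring).
      rewrite sumR_scal. unfold Rdiv; ring. }
  apply sumR_le. intros i Hi.
  destruct (Hd i Hi) as [H1 H2]. specialize (Hp i Hi).
  destruct (d i) as [|k] eqn:E. lia. simpl Nat.pred.
  assert (B := ineq_b x k K Hx ltac:(lia) HK).
  apply Rmult_le_compat_l; auto.
Qed.

Lemma S3 n p d K x : HypP n p d K -> 0 <= x <= 1 -> x ^ (S K) <= fp n p d x.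
Proof.
  intros [Hp [Hs [Hd _]]] Hx. unfold fp.
  replace (x ^ S K) with (sumR n (fun i => p i * x ^ S K)).
  2:{ rewrite (sumR_ext n _ (fun i => x ^ S K * p i)) by (intros; ring). rewrite sumR_scal, Hs. ring. }
  apply sumR_le. intros i Hi. apply Rmult_le_compat_l. auto.
  apply pow_mono_dec; auto. destruct (Hd i Hi); lia.
Qed.

Lemma S4 n p d K x : HypP n p d K -> 0 <= x <= 1 ->
  x - fp n p d x <= (mm n p d - 1) * (1 - x).
Proof.
  intros H Hx. rewrite (x_minus_fp n p d K x H), (mm_minus1 n p d K H).
  destruct H as [Hp [Hs [Hd _]]].
  rewrite Rmult_comm, <- sumR_scal. apply sumR_le. intros i Hi.
  destruct (Hd i Hi) as [H1 H2]. specialize (Hp i Hi).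
  destruct (d i) as [|k] eqn:E. lia. simpl Nat.pred.
  assert (D := ineq_d x k Hx).
  assert ((1 - x) * (p i * INR k) = p i * (INR k * (1 - x))) by ring.
  rewrite H. apply Rmult_le_compat_l; auto.
Qed.

Lemma sumR_nonneg n f : (forall i, (i < n)%nat -> 0 <= f i) -> 0 <= sumR n f.
Proof. induction n; simpl; intros H. lra. assert (0 <= f n) by (apply H; lia).
  assert (0 <= sumR n f) by (apply IHn; intros; apply H; lia). lra. Qed.

Lemma S5 n p d K x : HypP n p d K -> 0 <= x <= 1 ->
  0 <= fp n p d x /\ fp n p d x <= x.
Proof.
  intros H Hx. split.
  - destruct H as [Hp _]. unfold fp. apply sumR_nonneg.
    intros i Hi. apply Rmult_le_pos; auto. apply pow_le; lra.
  - assert (0 <= x - fp n p d x); [|lra]. rewrite (x_minus_fp n p d K x H).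
    destruct H as [Hp [Hs [Hd _]]]. apply sumR_nonneg.
    intros i Hi. apply Rmult_le_pos; auto.
    destruct (Hd i Hi). assert (x ^ d i <= x ^ 1) by (apply pow_mono_dec; auto). simpl in H1. lra.
Qed.

Lemma exRInt_pos (g : R -> R) (a b : R) : 0 < a -> 0 < b ->
  (forall x, 0 < x -> continuous g x) -> ex_RInt g a b.
Proof.
  intros Ha Hb Hc. apply (@ex_RInt_continuous R_CompleteNormedModule). intros z Hz. apply Hc.
  assert (0 < Rmin a b) by (apply Rmin_glb_lt; auto). lra.
Qed.

Lemma deriv_RInt_pos (g : R -> R) (s x : R) : 0 < s -> 0 < x ->
  (forall x, 0 < x -> continuous g x) -> is_derive (fun t => RInt g s t) x (g x).
Proof.
  intros Hs Hx Hc. apply (is_derive_RInt g (fun t => RInt g s t) s x).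
  - assert (Hx2 : 0 < x / 2) by lra. exists (mkposreal _ Hx2). intros b Hb.
    change (Rabs (b - x) < x / 2) in Hb.
    apply (@RInt_correct R_CompleteNormedModule). apply exRInt_pos; auto. apply Rabs_def2 in Hb. lra.
  - apply Hc; auto.
Qed.

Lemma pos_lemma (y al be : R -> R) (s w : R) : 0 < s <= w ->
  (forall x, 0 < x -> continuous al x) ->
  (forall x, 0 < x -> is_derive y x (al x * y x + be x)) ->
  (forall x, 0 < x -> 0 <= be x) -> 0 < y s -> 0 < y w.
Proof.
  intros Hsw Hc Hy Hb Hys.
  set (A := fun t => RInt al s t).
  assert (HA : forall x, 0 < x -> is_derive A x (al x)).
  { intros x Hx. apply deriv_RInt_pos; auto. lra. }
  assert (Hz : (fun t => y t * exp (- A t)) s <= (fun t => y t * exp (- A t)) w).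
  { apply (incr_lemma (fun t => y t * exp (- A t)) (fun t => be t * exp (- A t)) s w). lra.
    - intros x Hx. assert (0 < x) by lra.
      apply (dval _ x ((al x * y x + be x) * exp (- A x) + y x * (- al x * exp (- A x)))).
      + assert (Hi : is_derive (fun t => - A t) x (- al x)).
        { apply (dext (fun t => 0 - A t)). intros; ring.
          apply (dval _ x (0 - al x)). apply dminus. apply dconst. apply HA; auto. ring. }
        assert (He : is_derive (fun t => exp (- A t)) x (- al x * exp (- A x))).
        { apply (dcomp exp (fun t => - A t) x (exp (- A x)) (- al x)); auto.
          apply is_derive_exp. }
        apply (dmul y (fun t => exp (- A t))); auto.
      + ring.
    - intros x Hx. apply Rmult_le_pos. apply Hb; lra. left; apply exp_pos. }
  assert (E : RInt al s s = 0) by (rewrite (RInt_point s al); reflexivity).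
  assert (Hz2 : y s <= y w * exp (- RInt al s w)).
  { replace (y s) with (y s * exp (- RInt al s s)). exact Hz. rewrite E, Ropp_0, exp_0; ring. }
  clear Hz. rename Hz2 into Hz.
  destruct (Rle_or_lt (y w) 0) as [H|H]; auto.
  assert (y w * exp (- RInt al s w) <= 0).
  { assert (0 < exp (- RInt al s w)) by apply exp_pos. nra. }
  lra.
Qed.

Lemma near0 (F : R -> R) (lam : R) (e : posreal) (w : R) :
  filterlim F (at_right 0) (locally lam) -> 0 < w ->
  exists s, 0 < s <= w /\ Rabs (F s - lam) < e.
Proof.
  intros H Hw. pose proof (proj1 (@filterlim_locally R R_UniformSpace (at_right 0) _ F lam) H) as H2. specialize (H2 e). clear H. rename H2 into H.
  destruct H as [del Hdel].
  assert (Hd2 : 0 < del / 2) by (destruct del; simpl; lra).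
  exists (Rmin w (del / 2)). split.
  - split. apply Rmin_glb_lt; lra. apply Rmin_l.
  - apply (Hdel (Rmin w (del / 2))).
    + change (Rabs (Rmin w (del / 2) - 0) < del).
      assert (0 < Rmin w (del / 2)) by (apply Rmin_glb_lt; lra).
      assert (Rmin w (del / 2) <= del / 2) by apply Rmin_r.
      rewrite Rabs_right; lra.
    + apply Rmin_glb_lt; lra.
Qed.

Lemma fp_nonneg n p d K x : HypP n p d K -> 0 <= x -> 0 <= fp n p d x.
Proof.
  intros [Hp _] Hx. unfold fp. apply sumR_nonneg. intros i Hi.
  apply Rmult_le_pos; auto. apply pow_le; lra.
Qed.

Definition gg (n : nat) (p : nat -> R) (d : nat -> nat) (x : R) : R :=
  sumR n (fun i => p i * x ^ Nat.pred (d i)).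

Lemma fp_gg n p d K x : HypP n p d K -> fp n p d x = x * gg n p d x.
Proof.
  intros [Hp [Hs [Hd _]]]. unfold fp, gg. rewrite <- sumR_scal. apply sumR_ext.
  intros i Hi. destruct (Hd i Hi) as [H1 _]. destruct (d i) as [|k]. lia. simpl. ring.
Qed.

Lemma F_deriv n p d lam F x : solves_ode n p d lam F -> 0 < x ->
  is_derive F x (lam * fp n p d (F x) - F x).
Proof. intros [_ [_ H]] Hx. apply H; auto. Qed.

Lemma F_cont n p d lam F x : solves_ode n p d lam F -> 0 < x -> continuous F x.
Proof. intros H Hx. apply (deriv_cont F x _ (F_deriv n p d lam F x H Hx)). Qed.

Lemma F_in01 n p d K lam F : HypP n p d K -> 0 < lam < 1 -> solves_ode n p d lam F ->
  forall w, 0 < w -> 0 < F w < 1.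
Proof.
  intros HH Hlam Hsol w Hw.
  assert (He : 0 < Rmin lam (1 - lam)) by (apply Rmin_glb_lt; lra).
  destruct (near0 F lam (mkposreal _ He) w (proj1 (proj2 Hsol)) Hw) as [s [Hs Hfs]].
  simpl in Hfs. apply Rabs_def2 in Hfs.
  assert (Rmin lam (1 - lam) <= lam) by apply Rmin_l.
  assert (Rmin lam (1 - lam) <= 1 - lam) by apply Rmin_r.
  assert (Hpos : forall w, s <= w -> 0 < F w).
  { intros w' Hw'.
    apply (pos_lemma F (fun x => lam * gg n p d (F x) - 1) (fun _ => 0) s w'); try lra; try (intros; lra).
    - intros x Hx. apply cont_plus. 2: apply cont_const.
      apply cont_mul. apply cont_const. unfold gg.
      apply (sumR_cont n (fun i w => p i * F w ^ Nat.pred (d i))). intros i Hi.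
      apply cont_mul. apply cont_const. apply cont_pow. apply (F_cont n p d lam F x Hsol Hx).
    - intros x Hx. apply (dval _ _ _ _ (F_deriv n p d lam F x Hsol Hx)).
      rewrite (fp_gg n p d K (F x) HH). ring. }
  assert (Hposall : forall x, 0 < x -> 0 < F x).
  { intros x Hx. destruct (Rle_or_lt s x). apply Hpos; auto.
    (* for x < s, redo with a smaller s *)
    destruct (near0 F lam (mkposreal _ He) x (proj1 (proj2 Hsol)) Hx) as [s' [Hs' Hfs']].
    simpl in Hfs'. apply Rabs_def2 in Hfs'.
    apply (pos_lemma F (fun x => lam * gg n p d (F x) - 1) (fun _ => 0) s' x); try lra; try (intros; lra).
    - intros z Hz. apply cont_plus. 2: apply cont_const.
      apply cont_mul. apply cont_const. unfold gg.
      apply (sumR_cont n (fun i w => p i * F w ^ Nat.pred (d i))). intros i Hi.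
      apply cont_mul. apply cont_const. apply cont_pow. apply (F_cont n p d lam F z Hsol Hz).
    - intros z Hz. apply (dval _ _ _ _ (F_deriv n p d lam F z Hsol Hz)).
      rewrite (fp_gg n p d K (F z) HH). ring. }
  split. apply Hposall; auto.
  assert (0 < (fun t => 1 - F t) w); [|simpl in *; lra].
  apply (pos_lemma (fun t => 1 - F t) (fun x => sumR n (fun i => p i * Sg (d i) (F x)))
           (fun x => (1 - lam) * fp n p d (F x)) s w); try lra.
  - intros x Hx. apply (sumR_cont n (fun i w => p i * Sg (d i) (F w))). intros i Hi.
    apply cont_mul. apply cont_const. unfold Sg.
    apply (sumR_cont _ (fun j w => F w ^ S j)). intros j Hj. apply cont_pow.
    apply (F_cont n p d lam F x Hsol Hx).
  - intros x Hx.
    apply (dval _ x (0 - (lam * fp n p d (F x) - F x))).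
    apply (dminus (fun _ => 1) F). apply dconst. apply (F_deriv n p d lam F x Hsol Hx).
    assert (E1 : F x - fp n p d (F x) = sumR n (fun i => p i * (F x - F x ^ d i)))
      by apply (x_minus_fp n p d K _ HH).
    assert (E2 : sumR n (fun i => p i * (F x - F x ^ d i)) =
                 (1 - F x) * sumR n (fun i => p i * Sg (d i) (F x))).
    { rewrite <- sumR_scal. apply sumR_ext. intros i Hi.
      destruct HH as [_ [_ [Hd _]]]. rewrite (Sg_id (d i) (F x)) by (apply Hd; auto). ring. }
    lra.
  - intros x Hx. apply Rmult_le_pos. lra. apply (fp_nonneg n p d K); auto.
    left; apply Hposall; auto.
Qed.

Definition Gext (lam : R) (F : R -> R) (w : R) : R :=
  if Rlt_dec 0 w then F w else lam.

Lemma Gext_cont n p d lam F z : solves_ode n p d lam F -> 0 <= z -> continuous (Gext lam F) z.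
Proof.
  intros Hsol Hz. destruct (Rle_lt_or_eq_dec 0 z Hz) as [Hz'|Hz'].
  - apply (@continuous_ext_loc R_UniformSpace R_UniformSpace (Gext lam F) F z).
    + assert (Hz2 : 0 < z / 2) by lra. exists (mkposreal _ Hz2). intros y Hy.
      change (Rabs (y - z) < z / 2) in Hy. apply Rabs_def2 in Hy.
      unfold Gext. destruct (Rlt_dec 0 y). auto. lra.
    + apply (F_cont n p d lam F z Hsol Hz').
  - subst z. destruct Hsol as [H0 [Hl _]].
    intros P HP. unfold filtermap.
    assert (HG0 : Gext lam F 0 = lam) by (unfold Gext; destruct (Rlt_dec 0 0); [lra|auto]).
    rewrite HG0 in HP. destruct HP as [e He].
    pose proof (proj1 (@filterlim_locally R R_UniformSpace (at_right 0) _ F lam) Hl e) as H2.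
    destruct H2 as [del Hdel]. exists del. intros y Hy.
    unfold Gext. destruct (Rlt_dec 0 y).
    + apply He. apply Hdel; auto.
    + apply He. apply ball_center.
Qed.

Lemma F_exRInt n p d lam F k W : solves_ode n p d lam F -> 0 <= W ->
  ex_RInt (fun w => F w ^ k) 0 W.
Proof.
  intros Hsol HW.
  apply (ex_RInt_ext (fun w => Gext lam F w ^ k)).
  - intros x Hx. rewrite Rmin_left in Hx by lra. rewrite Rmax_right in Hx by lra.
    unfold Gext. destruct (Rlt_dec 0 x). auto. lra.
  - apply (@ex_RInt_continuous R_CompleteNormedModule). intros z Hz.
    rewrite Rmin_left in Hz by lra. rewrite Rmax_right in Hz by lra.
    apply cont_pow. apply (Gext_cont n p d); auto. lra.
Qed.

Definition denU (m lam ep x : R) : R := (m - 1) * (1 - x) + (1 - lam) * (1 - ep).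
Definition PsiU (m : R) (K : nat) (lam ep x : R) : R :=
  INR K / ((m - 1) * ep) * x - / (1 - ep) ^ K * ln (denU m lam ep x) / (m - 1).

Lemma denU_pos m lam ep x : m > 1 -> lam < 1 -> ep < 1 -> x <= 1 -> 0 < denU m lam ep x.
Proof.
  intros. unfold denU. assert (0 <= (m - 1) * (1 - x)) by (apply Rmult_le_pos; lra).
  assert (0 < (1 - lam) * (1 - ep)) by (apply Rmult_lt_0_compat; lra). lra.
Qed.

Lemma Dineq n p d K lam ep x : HypP n p d K -> 0 < lam < 1 -> 0 < ep < 1 -> 0 < x < 1 ->
  x <= (INR K / ((mm n p d - 1) * ep) + / (1 - ep) ^ K / denU (mm n p d) lam ep x)
       * (x - lam * fp n p d x).
Proof.
  intros HH Hl He Hx.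
  set (m := mm n p d). set (f := fp n p d x).
  assert (Hm : m > 1) by (destruct HH as [_ [_ [_ [_ Hm]]]]; exact Hm).
  assert (HK : 0 < INR K) by (destruct HH as [_ [_ [_ [HK _]]]]; apply lt_0_INR; lia).
  assert (Hx01 : 0 <= x <= 1) by lra.
  assert (HS1 := S1 n p d K x HH Hx01). assert (HS2 := S2 n p d K x HH Hx01).
  assert (HS3 := S3 n p d K x HH Hx01). assert (HS5 := S5 n p d K x HH Hx01).
  fold m f in HS1, HS2, HS3, HS5.
  assert (Hden := denU_pos m lam ep x Hm ltac:(lra) ltac:(lra) ltac:(lra)).
  assert (HD : x - lam * f = (x - f) + (1 - lam) * f) by ring.
  assert (Hf0 : 0 <= (1 - lam) * f) by (apply Rmult_le_pos; lra).
  assert (HS2' : 0 <= x * (1 - x) * (m - 1) / INR K).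
  { unfold Rdiv. apply Rmult_le_pos. apply Rmult_le_pos. apply Rmult_le_pos; lra. lra.
    left; apply Rinv_0_lt_compat; auto. }
  assert (HDpos : 0 <= x - lam * f) by lra.
  assert (Ha : 0 < INR K / ((m - 1) * ep)).
  { apply Rdiv_lt_0_compat; auto. apply Rmult_lt_0_compat; lra. }
  assert (HpK : 0 < (1 - ep) ^ K) by (apply pow_lt; lra).
  assert (Hb : 0 < / (1 - ep) ^ K / denU m lam ep x).
  { apply Rdiv_lt_0_compat; auto. apply Rinv_0_lt_compat; auto. }
  destruct (Rle_or_lt (1 - ep) x) as [Hc|Hc].
  -
    assert (HxK : (1 - ep) ^ K <= x ^ K) by (apply pow_incr; lra).
    assert (HxK0 : 0 <= x ^ K) by (apply pow_le; lra).
    assert (E3 : x ^ S K = x ^ K * x) by (simpl; ring).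
    assert (HDlow : x ^ K * ((m - 1) * (1 - x) + (1 - lam) * x) <= x - lam * f).
    { assert ((1 - lam) * x ^ S K <= (1 - lam) * f) by (apply Rmult_le_compat_l; lra).
      rewrite E3 in H. nra. }
    assert (Hdl : (1 - ep) ^ K * denU m lam ep x <= x ^ K * ((m - 1) * (1 - x) + (1 - lam) * x)).
    { unfold denU. apply Rmult_le_compat; try lra.
      unfold denU in Hden. lra.
      assert ((1 - lam) * (1 - ep) <= (1 - lam) * x) by (apply Rmult_le_compat_l; lra). lra. }
    assert (Hone : 1 <= / (1 - ep) ^ K / denU m lam ep x * (x - lam * f)).
    { assert (E1 : / (1 - ep) ^ K / denU m lam ep x * ((1 - ep) ^ K * denU m lam ep x) = 1)
        by (field; lra).
      rewrite <- E1 at 1. apply Rmult_le_compat_l; lra. }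
    assert (0 <= INR K / ((m - 1) * ep) * (x - lam * f)) by (apply Rmult_le_pos; lra).
    rewrite Rmult_plus_distr_r. lra.
  -
    assert (Hlow : x * ep * (m - 1) / INR K <= x - lam * f).
    { assert (x * ep * (m - 1) / INR K <= x * (1 - x) * (m - 1) / INR K); [|lra].
      unfold Rdiv. apply Rmult_le_compat_r. left; apply Rinv_0_lt_compat; auto.
      apply Rmult_le_compat_r. lra. apply Rmult_le_compat_l; lra. }
    assert (Hx' : x <= INR K / ((m - 1) * ep) * (x - lam * f)).
    { assert (E1 : INR K / ((m - 1) * ep) * (x * ep * (m - 1) / INR K) = x) by (field; lra).
      rewrite <- E1 at 1. apply Rmult_le_compat_l; lra. }
    assert (0 <= / (1 - ep) ^ K / denU m lam ep x * (x - lam * f)) by (apply Rmult_le_pos; lra).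
    rewrite Rmult_plus_distr_r. lra.
Qed.

Lemma RInt_F_upper n p d K lam F ep W : HypP n p d K -> 0 < lam < 1 -> solves_ode n p d lam F ->
  0 < ep < 1 -> 1 <= W ->
  RInt F 1 W <= PsiU (mm n p d) K lam ep 1 - PsiU (mm n p d) K lam ep 0.
Proof.
  intros HH Hl Hsol He HW.
  set (m := mm n p d).
  assert (Hm : m > 1) by (destruct HH as [_ [_ [_ [_ Hm]]]]; exact Hm).
  assert (Hin := F_in01 n p d K lam F HH Hl Hsol).
  set (a1 := INR K / ((m - 1) * ep)). set (b := / (1 - ep) ^ K).
  set (Dd := fun t => F t - lam * fp n p d (F t)).
  assert (Hdec : (fun t => RInt F 1 t + PsiU m K lam ep (F t)) W <=
                 (fun t => RInt F 1 t + PsiU m K lam ep (F t)) 1).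
  { apply (decr_lemma (fun t => RInt F 1 t + PsiU m K lam ep (F t))
             (fun t => F t - (a1 + b / denU m lam ep (F t)) * Dd t) 1 W HW).
    - intros t Ht. assert (Ht0 : 0 < t) by lra.
      destruct (Hin t Ht0) as [HF0 HF1].
      assert (Hden := denU_pos m lam ep (F t) Hm ltac:(lra) ltac:(lra) ltac:(lra)).
      assert (HF' := F_deriv n p d lam F t Hsol Ht0).
      assert (Hi : is_derive (fun s => denU m lam ep (F s)) t ((m - 1) * (0 - (lam * fp n p d (F t) - F t)))).
      { apply (dext (fun s => (m - 1) * (1 - F s) + (1 - lam) * (1 - ep))). intros; reflexivity.
        apply (dval _ t ((m - 1) * (0 - (lam * fp n p d (F t) - F t)) + 0)); [|ring].
        apply dplus; [|apply dconst]. apply is_derive_scal. apply (dminus (fun _ => 1) F); auto. apply dconst. }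
      assert (Hln : is_derive (fun s => ln (denU m lam ep (F s))) t
                      ((m - 1) * (0 - (lam * fp n p d (F t) - F t)) * / denU m lam ep (F t))).
      { apply (dcomp ln (fun s => denU m lam ep (F s))); auto. apply is_derive_ln; auto. }
      apply (dval _ t (F t + (a1 * (lam * fp n p d (F t) - F t) -
                 b / (m - 1) * ((m - 1) * (0 - (lam * fp n p d (F t) - F t)) * / denU m lam ep (F t))))).
      + apply dplus. apply deriv_RInt_pos; try lra. intros x Hx; apply (F_cont n p d lam F x Hsol Hx).
        apply (dext (fun s => a1 * F s - b / (m - 1) * ln (denU m lam ep (F s)))).
        intros; unfold PsiU; fold a1; fold b; unfold Rdiv; ring.
        apply dminus. apply is_derive_scal; auto. apply is_derive_scal; auto.
      + unfold Dd. field. split; lra.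
    - intros t Ht. assert (Ht0 : 0 < t) by lra. destruct (Hin t Ht0) as [HF0 HF1].
      assert (HD := Dineq n p d K lam ep (F t) HH Hl He ltac:(lra)). fold m in HD.
      unfold Dd. fold a1 in HD. fold b in HD. lra. }
  simpl in Hdec.
  assert (E : RInt F 1 1 = 0) by (rewrite (RInt_point 1 F); reflexivity).
  rewrite E in Hdec.
  assert (Hmono : forall x y, 0 <= x <= y -> y <= 1 -> PsiU m K lam ep x <= PsiU m K lam ep y).
  { intros x y Hxy Hy1. unfold PsiU.
    assert (Ha : 0 < INR K / ((m - 1) * ep)).
    { destruct HH as [_ [_ [_ [HK _]]]]. apply Rdiv_lt_0_compat. apply lt_0_INR; lia.
      apply Rmult_lt_0_compat; lra. }
    assert (Hb : 0 < / (1 - ep) ^ K) by (apply Rinv_0_lt_compat; apply pow_lt; lra).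
    assert (Hdx := denU_pos m lam ep x Hm ltac:(lra) ltac:(lra) ltac:(lra)).
    assert (Hdy := denU_pos m lam ep y Hm ltac:(lra) ltac:(lra) ltac:(lra)).
    assert (ln (denU m lam ep y) <= ln (denU m lam ep x)).
    { apply ln_le; auto. unfold denU. assert ((m - 1) * (1 - y) <= (m - 1) * (1 - x)) by (apply Rmult_le_compat_l; lra). lra. }
    assert (INR K / ((m - 1) * ep) * x <= INR K / ((m - 1) * ep) * y) by (apply Rmult_le_compat_l; lra).
    assert (/ (1 - ep) ^ K * ln (denU m lam ep y) / (m - 1) <= / (1 - ep) ^ K * ln (denU m lam ep x) / (m - 1)).
    { unfold Rdiv. apply Rmult_le_compat_r. left; apply Rinv_0_lt_compat; lra. apply Rmult_le_compat_l; lra. }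
    lra. }
  assert (HW0 : 0 < W) by lra.
  destruct (Hin W HW0). destruct (Hin 1 ltac:(lra)).
  assert (PsiU m K lam ep (F 1) <= PsiU m K lam ep 1) by (apply Hmono; lra).
  assert (PsiU m K lam ep 0 <= PsiU m K lam ep (F W)) by (apply Hmono; lra).
  lra.
Qed.

Lemma F_lower n p d K lam F w : HypP n p d K -> 0 < lam < 1 -> solves_ode n p d lam F -> 0 < w ->
  1 - F w <= (1 - lam) * (2 + / (mm n p d - 1)) * exp ((mm n p d - 1) * w).
Proof.
  intros HH Hl Hsol Hw.
  set (m := mm n p d).
  assert (Hm : m > 1) by (destruct HH as [_ [_ [_ [_ Hm]]]]; exact Hm).
  assert (Hin := F_in01 n p d K lam F HH Hl Hsol).
  set (a := 1 - lam). set (b := m - 1).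
  assert (Ha : 0 < a) by (unfold a; lra). assert (Hb : 0 < b) by (unfold b; lra).
  assert (Ha2 : a = 1 - lam) by reflexivity.
  destruct (near0 F lam (mkposreal a Ha) w (proj1 (proj2 Hsol)) Hw) as [s [Hs Hfs]].
  simpl in Hfs. apply Rabs_def2 in Hfs.
  assert (Hz : (fun t => (1 - F t + a / b) * exp (- (b * t))) w <=
               (fun t => (1 - F t + a / b) * exp (- (b * t))) s).
  { apply (decr_lemma (fun t => (1 - F t + a / b) * exp (- (b * t)))
      (fun t => (F t - lam * fp n p d (F t) - b * (1 - F t) - a) * exp (- (b * t))) s w); try lra.
    - intros t Ht. assert (Ht0 : 0 < t) by lra.
      assert (HF' := F_deriv n p d lam F t Hsol Ht0).
      assert (H1 : is_derive (fun s => 1 - F s + a / b) t (0 - (lam * fp n p d (F t) - F t) + 0)).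
      { apply dplus; [|apply dconst]. apply (dminus (fun _ => 1) F); auto. apply dconst. }
      assert (H2 : is_derive (fun s => exp (- (b * s))) t (- (b * 1) * exp (- (b * t)))).
      { apply (dcomp exp (fun s => - (b * s))). apply is_derive_exp.
        apply (dext (fun s => 0 - b * s)). intros; ring.
        apply (dval _ t (0 - b * 1)); [|ring]. apply dminus. apply dconst. apply is_derive_scal. apply did. }
      apply (dval _ t ((0 - (lam * fp n p d (F t) - F t) + 0) * exp (- (b * t))
                  + (1 - F t + a / b) * (- (b * 1) * exp (- (b * t))))).
      apply (dmul (fun s => 1 - F s + a / b) (fun s => exp (- (b * s)))); auto.
      field. lra.
    - intros t Ht. assert (Ht0 : 0 < t) by lra. destruct (Hin t Ht0) as [HF0 HF1].
      assert (HS4 := S4 n p d K (F t) HH ltac:(lra)). assert (HS5 := S5 n p d K (F t) HH ltac:(lra)).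
      fold m in HS4. fold b in HS4.
      assert (F t - lam * fp n p d (F t) - b * (1 - F t) - a <= 0).
      { assert (a * fp n p d (F t) <= a * 1) by (apply Rmult_le_compat_l; lra).
        replace (F t - lam * fp n p d (F t)) with ((F t - fp n p d (F t)) + a * fp n p d (F t)) by (unfold a; ring).
        rewrite Rmult_comm in HS4. lra. }
      assert (0 < exp (- (b * t))) by apply exp_pos. nra. }
  simpl in Hz.
  assert (Hes : exp (- (b * s)) <= 1).
  { rewrite <- exp_0. destruct (Req_dec s 0). subst; lra.
    left. apply exp_increasing. assert (0 < b * s) by (apply Rmult_lt_0_compat; lra). lra. }
  assert (Hzs : (1 - F s + a / b) * exp (- (b * s)) <= 2 * a + a / b).
  { assert (0 < a / b) by (apply Rdiv_lt_0_compat; lra).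
    assert (0 <= 1 - F s + a / b). { destruct (Hin s ltac:(lra)). lra. }
    assert ((1 - F s + a / b) * exp (- (b * s)) <= (1 - F s + a / b) * 1).
    { apply Rmult_le_compat_l; lra. } lra. }
  assert (Hew : exp (- (b * w)) * exp (b * w) = 1).
  { rewrite <- exp_plus. replace (- (b * w) + b * w) with 0 by ring. apply exp_0. }
  assert (0 < exp (b * w)) by apply exp_pos.
  assert (Hmain : 1 - F w + a / b <= (2 * a + a / b) * exp (b * w)).
  { replace (1 - F w + a / b) with ((1 - F w + a / b) * exp (- (b * w)) * exp (b * w))
      by (rewrite Rmult_assoc, Hew; ring).
    apply Rmult_le_compat_r; lra. }
  assert (0 < a / b) by (apply Rdiv_lt_0_compat; lra).
  replace ((1 - lam) * (2 + / m - 1)) with ((1 - lam) * (2 + / m - 1)) by reflexivity.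
  fold a. fold b.
  replace (a * (2 + / b)) with (2 * a + a / b) by (field; lra). lra.
Qed.

Lemma RInt_constR (a b c : R) : RInt (fun _ => c) a b = (b - a) * c.
Proof. rewrite RInt_const. reflexivity. Qed.

Lemma J_mono n p d lam F k W1 W2 : solves_ode n p d lam F -> 0 <= W1 <= W2 ->
  (forall w, 0 < w -> 0 <= F w) ->
  RInt (fun w => F w ^ k) 0 W1 <= RInt (fun w => F w ^ k) 0 W2.
Proof.
  intros Hsol HW Hpos.
  assert (E2 := F_exRInt n p d lam F k W2 Hsol ltac:(lra)).
  assert (E1 := F_exRInt n p d lam F k W1 Hsol ltac:(lra)).
  assert (E12 : ex_RInt (fun w => F w ^ k) W1 W2).
  { apply (@ex_RInt_Chasles_2 R_CompleteNormedModule _ 0); auto; lra. }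
  rewrite <- (@RInt_Chasles R_CompleteNormedModule (fun w => F w ^ k) 0 W1 W2 E1 E12).
  assert (0 <= RInt (fun w => F w ^ k) W1 W2).
  { apply RInt_ge_0; auto. lra. intros x Hx. apply pow_le. apply Hpos. lra. }
  change (plus (RInt (fun w : R => F w ^ k) 0 W1) (RInt (fun w : R => F w ^ k) W1 W2))
    with (RInt (fun w : R => F w ^ k) 0 W1 + RInt (fun w : R => F w ^ k) W1 W2).
  lra.
Qed.

Definition UB (m : R) (K : nat) (lam ep : R) : R := 1 + (PsiU m K lam ep 1 - PsiU m K lam ep 0).

Lemma J_upper n p d K lam F k ep W : HypP n p d K -> 0 < lam < 1 -> solves_ode n p d lam F ->
  (1 <= k)%nat -> 0 < ep < 1 -> 0 <= W ->
  RInt (fun w => F w ^ k) 0 W <= UB (mm n p d) K lam ep.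
Proof.
  intros HH Hl Hsol Hk He HW.
  assert (Hin := F_in01 n p d K lam F HH Hl Hsol).
  assert (Hpos : forall w, 0 < w -> 0 <= F w) by (intros w Hw; destruct (Hin w Hw); lra).
  set (W' := Rmax W 1).
  assert (HW' : W <= W' /\ 1 <= W') by (split; [apply Rmax_l | apply Rmax_r]).
  apply Rle_trans with (RInt (fun w => F w ^ k) 0 W').
  { apply (J_mono n p d lam F k W W'); auto. lra. }
  apply Rle_trans with (RInt (fun w => F w ^ 1) 0 W').
  { apply RInt_le. lra. apply (F_exRInt n p d lam F); auto. lra. apply (F_exRInt n p d lam F); auto. lra.
    intros x Hx. destruct (Hin x ltac:(lra)). apply pow_mono_dec; auto. lra. }
  assert (E1 := F_exRInt n p d lam F 1 1 Hsol ltac:(lra)).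
  assert (EW := F_exRInt n p d lam F 1 W' Hsol ltac:(lra)).
  assert (E12 : ex_RInt (fun w => F w ^ 1) 1 W').
  { apply (@ex_RInt_Chasles_2 R_CompleteNormedModule _ 0); auto; lra. }
  rewrite <- (@RInt_Chasles R_CompleteNormedModule (fun w => F w ^ 1) 0 1 W' E1 E12).
  change (plus (RInt (fun w : R => F w ^ 1) 0 1) (RInt (fun w : R => F w ^ 1) 1 W'))
    with (RInt (fun w : R => F w ^ 1) 0 1 + RInt (fun w : R => F w ^ 1) 1 W').
  assert (H01 : RInt (fun w => F w ^ 1) 0 1 <= 1).
  { apply Rle_trans with (RInt (fun _ => 1) 0 1).
    apply RInt_le; auto. lra. apply ex_RInt_const.
    intros x Hx. destruct (Hin x ltac:(lra)). simpl. lra.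
    rewrite RInt_constR. lra. }
  assert (H1W : RInt (fun w => F w ^ 1) 1 W' = RInt F 1 W').
  { apply RInt_ext. intros; simpl; ring. }
  rewrite H1W. unfold UB.
  assert (RInt F 1 W' <= PsiU (mm n p d) K lam ep 1 - PsiU (mm n p d) K lam ep 0).
  { apply (RInt_F_upper n p d K lam F ep W'); auto. lra. }
  lra.
Qed.

Lemma EWi_bounds n p d K lam F k ep : HypP n p d K -> 0 < lam < 1 -> solves_ode n p d lam F ->
  (1 <= k)%nat -> 0 < ep < 1 ->
  (forall T, 0 <= T -> RInt (fun w => F w ^ k) 0 T <= EWi F k) /\ EWi F k <= UB (mm n p d) K lam ep.
Proof.
  intros HH Hl Hsol Hk He.
  assert (Hin := F_in01 n p d K lam F HH Hl Hsol).
  assert (Hpos : forall w, 0 < w -> 0 <= F w) by (intros w Hw; destruct (Hin w Hw); lra).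
  set (J := fun W => RInt (fun w => F w ^ k) 0 W).
  set (S := fun v => exists W, 0 <= W /\ v = J W).
  assert (Hb : bound S).
  { exists (UB (mm n p d) K lam ep). intros v [W [HW ->]]. apply (J_upper n p d K lam F k ep W); auto. }
  assert (Hne : exists v, S v) by (exists (J 0); exists 0; split; [lra|auto]).
  destruct (completeness S Hb Hne) as [l [Hub Hleast]].
  assert (Hlim : is_RInt_gen (fun w => F w ^ k) (at_point 0) (Rbar_locally p_infty) l).
  { intros P [eps Heps]. unfold filtermapi.
    assert (Hex : exists W0, 0 <= W0 /\ l - eps < J W0).
    { destruct (Rle_or_lt l (l - eps / 2)) as [Hc|Hc].
      - destruct eps; simpl in *; lra.
      - apply NNPP. intros Hn. assert (l <= l - eps).
        { apply Hleast. intros v [W [HW ->]]. destruct (Rle_or_lt (J W) (l - eps)); auto.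
          exfalso. apply Hn. exists W; split; auto. }
        destruct eps; simpl in *; lra. }
    destruct Hex as [W0 [HW0 HJ]].
    apply (Filter_prod _ _ _ (fun a => a = 0) (fun b => W0 < b)).
    - reflexivity.
    - exists W0. auto.
    - intros a b Ha Hb'. simpl. subst a. exists (J b). split.
      + apply (@RInt_correct R_CompleteNormedModule). apply (F_exRInt n p d lam F); auto. lra.
      + apply Heps. change (Rabs (J b - l) < eps).
        assert (J W0 <= J b) by (apply (J_mono n p d lam F k W0 b); auto; lra).
        assert (J b <= l) by (apply Hub; exists b; split; auto; lra).
        apply Rabs_def1; lra. }
  assert (HE : EWi F k = l).
  { unfold EWi. apply is_RInt_gen_unique. exact Hlim. }
  rewrite HE. split.
  - intros T HT. apply Hub. exists T. split; auto.
  - apply Hleast. intros v [W [HW ->]]. apply (J_upper n p d K lam F k ep W); auto.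
Qed.

Lemma EW_upper_explicit n p d K lam F k ep : HypP n p d K -> 0 < lam < 1 -> solves_ode n p d lam F ->
  (1 <= k)%nat -> 0 < ep < 1 ->
  EWi F k <= 1 + INR K / ((mm n p d - 1) * ep)
     + / (1 - ep) ^ K * (ln (mm n p d) - ln (1 - ep) - ln (1 - lam)) / (mm n p d - 1).
Proof.
  intros HH Hl Hsol Hk He.
  destruct (EWi_bounds n p d K lam F k ep HH Hl Hsol Hk He) as [_ HU].
  eapply Rle_trans; [exact HU|]. unfold UB, PsiU, denU.
  set (m := mm n p d).
  assert (Hm : m > 1) by (destruct HH as [_ [_ [_ [_ Hm]]]]; exact Hm).
  set (c := (1 - lam) * (1 - ep)).
  assert (Hc0 : 0 < c) by (apply Rmult_lt_0_compat; lra).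
  assert (Hc1 : c <= 1).
  { unfold c. assert ((1 - lam) * (1 - ep) <= 1 * 1) by (apply Rmult_le_compat; lra). lra. }
  replace ((m - 1) * (1 - 1) + c) with c by ring.
  replace ((m - 1) * (1 - 0) + c) with (m - 1 + c) by ring.
  assert (Hlc : ln c = ln (1 - lam) + ln (1 - ep)) by (apply ln_mult; lra).
  assert (Hlm : ln (m - 1 + c) <= ln m) by (apply ln_le; lra).
  assert (Hb : 0 < / (1 - ep) ^ K) by (apply Rinv_0_lt_compat; apply pow_lt; lra).
  assert (Hmi : 0 < / (m - 1)) by (apply Rinv_0_lt_compat; lra).
  assert (/ (1 - ep) ^ K * ln (m - 1 + c) * / (m - 1) <= / (1 - ep) ^ K * ln m * / (m - 1)).
  { apply Rmult_le_compat_r; [lra|]. apply Rmult_le_compat_l; lra. }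
  unfold Rdiv. rewrite Hlc.
  replace (INR K * / ((m - 1) * ep) * 1) with (INR K * / ((m - 1) * ep)) by ring.
  replace (INR K * / ((m - 1) * ep) * 0) with 0 by ring.
  nra.
Qed.

Lemma EW_lower_explicit n p d K lam F k del T : HypP n p d K -> 0 < lam < 1 -> solves_ode n p d lam F ->
  (1 <= k)%nat -> 0 < del < 1 -> 0 <= T ->
  (1 - lam) * (2 + / (mm n p d - 1)) * exp ((mm n p d - 1) * T) <= del ->
  T * (1 - del) ^ k <= EWi F k.
Proof.
  intros HH Hl Hsol Hk Hd HT Hc.
  assert (Hm : mm n p d > 1) by (destruct HH as [_ [_ [_ [_ Hm]]]]; exact Hm).
  assert (He : 0 < 1 / 2 < 1) by lra.
  destruct (EWi_bounds n p d K lam F k (1/2) HH Hl Hsol Hk He) as [HL _].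
  eapply Rle_trans; [|apply (HL T HT)].
  replace (T * (1 - del) ^ k) with ((T - 0) * (1 - del) ^ k) by ring.
  rewrite <- RInt_constR.
  apply RInt_le; auto. apply ex_RInt_const. apply (F_exRInt n p d lam F); auto.
  intros x Hx. apply pow_incr. split. lra.
  assert (HL2 := F_lower n p d K lam F x HH Hl Hsol ltac:(lra)).
  assert (exp ((mm n p d - 1) * x) <= exp ((mm n p d - 1) * T)).
  { destruct (Req_dec x T). subst; lra. left; apply exp_increasing.
    apply Rmult_lt_compat_l; lra. }
  assert (0 < (1 - lam) * (2 + / (mm n p d - 1))).
  { apply Rmult_lt_0_compat. lra. assert (0 < / (mm n p d - 1)) by (apply Rinv_0_lt_compat; lra). lra. }
  assert ((1 - lam) * (2 + / (mm n p d - 1)) * exp ((mm n p d - 1) * x) <=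
          (1 - lam) * (2 + / (mm n p d - 1)) * exp ((mm n p d - 1) * T)) by (apply Rmult_le_compat_l; lra).
  lra.
Qed.

Lemma bern (x : R) (k : nat) : 0 <= x <= 1 -> 1 - INR k * x <= (1 - x) ^ k.
Proof.
  intros Hx. destruct k as [|k]. simpl. lra.
  assert (H := ineq_d (1 - x) k ltac:(lra)). rewrite S_INR. lra.
Qed.

Lemma t_large (y M : R) : y < 1 -> 1 - y < exp (- M) -> M < - ln (1 - y).
Proof.
  intros Hy H. assert (ln (1 - y) < ln (exp (- M))) by (apply ln_increasing; lra).
  rewrite ln_exp in H0. lra.
Qed.

Lemma asym (m : R) (K k : nat) (E : R -> R) :
  m > 1 -> (1 <= K)%nat -> (1 <= k <= K)%nat ->
  (forall lam ep, 0 < lam < 1 -> 0 < ep < 1 ->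
     E lam <= 1 + INR K / ((m - 1) * ep) + / (1 - ep) ^ K * (ln m - ln (1 - ep) - ln (1 - lam)) / (m - 1)) ->
  (forall lam del T, 0 < lam < 1 -> 0 < del < 1 -> 0 <= T ->
     (1 - lam) * (2 + / (m - 1)) * exp ((m - 1) * T) <= del -> T * (1 - del) ^ k <= E lam) ->
  filterlim (fun lam => - E lam / ln (1 - lam)) (at_left 1) (locally (/ (m - 1))).
Proof.
  intros Hm HK Hk HU HL.
  apply (proj2 (@filterlim_locally R R_UniformSpace (at_left 1) _ _ _)).
  intros [eps Heps]. simpl.
  set (L := / (m - 1)).
  assert (HLp : 0 < L) by (apply Rinv_0_lt_compat; lra).
  assert (HLm : L * (m - 1) = 1) by (unfold L; field; lra).
  assert (HKp : 1 <= INR K) by (apply (le_INR 1); lia).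
  assert (Hkp : 1 <= INR k <= INR K) by (split; [apply (le_INR 1) | apply le_INR]; lia).
  set (eta1 := (m - 1) * eps / 2).
  assert (Heta : 0 < eta1) by (unfold eta1; apply Rmult_lt_0_compat; [apply Rmult_lt_0_compat|]; lra).
  set (ep := eta1 / (2 * INR K * (1 + eta1))).
  assert (Hep0 : 0 < ep) by (unfold ep; apply Rdiv_lt_0_compat; [lra|]; apply Rmult_lt_0_compat; lra).
  assert (HKep : INR K * ep = eta1 / (2 * (1 + eta1))) by (unfold ep; field; lra).
  assert (Hep1 : ep < 1).
  { assert (eta1 / (2 * (1 + eta1)) < 1 / 2).
    { apply (Rmult_lt_reg_r (2 * (1 + eta1))). lra. unfold Rdiv. rewrite Rmult_assoc, Rinv_l by lra. lra. }
    assert (ep <= INR K * ep) by (rewrite <- (Rmult_1_l ep) at 1; apply Rmult_le_compat_r; lra). lra. }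
  set (B := / (1 - ep) ^ K).
  assert (HpowK : 1 / (1 + eta1) <= (1 - ep) ^ K).
  { assert (Hb := bern ep K ltac:(lra)).
    assert (1 / (1 + eta1) <= 1 - INR K * ep); [|lra]. rewrite HKep.
    assert (E1 : 1 - eta1 / (2 * (1 + eta1)) - 1 / (1 + eta1) = eta1 / (2 * (1 + eta1))) by (field; lra).
    assert (0 < eta1 / (2 * (1 + eta1))) by (apply Rdiv_lt_0_compat; lra). lra. }
  assert (HpK : 0 < (1 - ep) ^ K) by (apply pow_lt; lra).
  assert (HB : B <= 1 + eta1).
  { unfold B. apply (Rmult_le_reg_r ((1 - ep) ^ K)); auto. rewrite Rinv_l by lra.
    assert (E1 : (1 + eta1) * (1 / (1 + eta1)) = 1) by (field; lra).
    assert ((1 + eta1) * (1 / (1 + eta1)) <= (1 + eta1) * (1 - ep) ^ K) by (apply Rmult_le_compat_l; lra).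
    lra. }
  assert (HBp : 0 < B) by (unfold B; apply Rinv_0_lt_compat; auto).
  set (C1 := 1 + INR K / ((m - 1) * ep) + B * (ln m - ln (1 - ep)) / (m - 1)).
  set (del := eps / (2 * INR K * (L + eps))).
  assert (Hden : 0 < 2 * INR K * (L + eps)) by (apply Rmult_lt_0_compat; lra).
  assert (Hdel0 : 0 < del) by (unfold del; apply Rdiv_lt_0_compat; lra).
  assert (HKd : INR K * del = eps / (2 * (L + eps))) by (unfold del; field; lra).
  assert (HKd2 : INR K * del < 1 / 2).
  { rewrite HKd. apply (Rmult_lt_reg_r (2 * (L + eps))). lra.
    unfold Rdiv. rewrite Rmult_assoc, Rinv_l by lra. lra. }
  assert (HKdel : INR K * del * L < eps / 2).
  { rewrite HKd. apply (Rmult_lt_reg_r (2 * (L + eps))). lra.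
    replace (eps / (2 * (L + eps)) * L * (2 * (L + eps))) with (eps * L) by (field; lra).
    nra. }
  assert (Hdel1 : del < 1).
  { assert (del <= INR K * del) by (rewrite <- (Rmult_1_l del) at 1; apply Rmult_le_compat_r; lra). lra. }
  set (C0 := 2 + / (m - 1)).
  assert (HC0 : 2 < C0) by (unfold C0; fold L; lra).
  set (c2 := ln C0 - ln del).
  assert (Hc2 : 0 < c2).
  { unfold c2. assert (ln del < ln C0) by (apply ln_increasing; lra). lra. }
  set (M := Rmax (Rmax (2 * C1 / eps) (2 * L * c2 / eps)) c2 + 1).
  assert (HM1 : 2 * C1 / eps < M /\ 2 * L * c2 / eps < M /\ c2 < M).
  { unfold M. assert (H1 := Rmax_l (Rmax (2 * C1 / eps) (2 * L * c2 / eps)) c2).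
    assert (H2 := Rmax_r (Rmax (2 * C1 / eps) (2 * L * c2 / eps)) c2).
    assert (H3 := Rmax_l (2 * C1 / eps) (2 * L * c2 / eps)).
    assert (H4 := Rmax_r (2 * C1 / eps) (2 * L * c2 / eps)). lra. }
  assert (HM0 : 0 < M) by lra.
  assert (HeM : 0 < exp (- M)) by apply exp_pos.
  assert (HeM1 : exp (- M) < 1).
  { rewrite <- exp_0. apply exp_increasing. lra. }
  exists (mkposreal _ HeM). intros y Hy Hy1. simpl in Hy.
  change (Rabs (y - 1) < exp (- M)) in Hy. apply Rabs_def2 in Hy.
  assert (Hy0 : 0 < y < 1) by lra.
  set (t := - ln (1 - y)).
  assert (Ht : M < t) by (apply t_large; lra).
  assert (Ht0 : 0 < t) by lra.
  change (Rabs (- E y / ln (1 - y) - L) < eps).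
  assert (Hln : ln (1 - y) <> 0) by (assert (Ht2 : t = - ln (1 - y)) by reflexivity; lra).
  replace (- E y / ln (1 - y)) with (E y / t) by (unfold t; field; auto).
  apply Rabs_def1.
  -
    assert (HE := HU y ep Hy0 ltac:(lra)). fold B in HE.
    assert (HE2 : E y <= C1 + B * t * L).
    { unfold C1, t, L. unfold Rdiv in *. replace (- ln (1 - y)) with (0 - ln (1 - y)) by ring. lra. }
    assert (HC1 : C1 / t < eps / 2).
    { apply (Rmult_lt_reg_r t); auto. unfold Rdiv. rewrite Rmult_assoc, Rinv_l by lra.
      destruct HM1 as [HM1 _]. apply (Rmult_lt_compat_r eps) in HM1; auto.
      unfold Rdiv in HM1. rewrite Rmult_assoc, Rinv_l, Rmult_1_r in HM1 by lra.
      assert (M * eps < t * eps) by (apply Rmult_lt_compat_r; lra). lra. }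
    assert (E y / t <= C1 / t + B * L).
    { unfold Rdiv. apply (Rmult_le_reg_r t); auto.
      replace ((C1 * / t + B * L) * t) with (C1 + B * t * L) by (field; lra).
      rewrite Rmult_assoc, Rinv_l, Rmult_1_r by lra. auto. }
    assert (B * L <= (1 + eta1) * L) by (apply Rmult_le_compat_r; lra).
    assert (eta1 * L = eps / 2).
    { unfold eta1. replace ((m - 1) * eps / 2 * L) with (L * (m - 1) * eps / 2) by (unfold Rdiv; ring). rewrite HLm. unfold Rdiv; ring. }
    lra.
  -
    set (T := (t - c2) / (m - 1)).
    assert (HT0 : 0 <= T) by (unfold T; apply Rmult_le_pos; [lra| left; apply Rinv_0_lt_compat; lra]).
    assert (HTc : (1 - y) * C0 * exp ((m - 1) * T) <= del).
    { replace ((m - 1) * T) with (t - c2) by (unfold T; field; lra).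
      assert (Et : exp t = / (1 - y)) by (unfold t; rewrite exp_Ropp, exp_ln; lra).
      assert (Ec : exp (- c2) = del / C0).
      { unfold c2. replace (- (ln C0 - ln del)) with (ln del + - ln C0) by ring.
        rewrite exp_plus, exp_Ropp, !exp_ln by lra. unfold Rdiv; ring. }
      assert (Etc : exp (t - c2) = exp t * exp (- c2)) by (unfold Rminus; apply exp_plus).
      rewrite Etc, Et, Ec. right. field. split; lra. }
    assert (HE := HL y del T Hy0 ltac:(lra) HT0 HTc).
    assert (Hb := bern del k ltac:(lra)).
    assert (1 - INR K * del <= (1 - del) ^ k).
    { assert (INR k * del <= INR K * del) by (apply Rmult_le_compat_r; lra). lra. }
    assert (HKd1 : 0 <= 1 - INR K * del).
    { lra. }
    assert (T * (1 - INR K * del) <= E y).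
    { eapply Rle_trans; [|exact HE]. apply Rmult_le_compat_l; auto. }
    assert (HTt : T / t = L - L * c2 / t) by (unfold T, L; field; lra).
    assert (HLc2 : L * c2 / t < eps / 2).
    { apply (Rmult_lt_reg_r t); auto. unfold Rdiv. rewrite Rmult_assoc, Rinv_l, Rmult_1_r by lra.
      destruct HM1 as [_ [HM2 _]]. apply (Rmult_lt_compat_r eps) in HM2; auto.
      unfold Rdiv in HM2. rewrite Rmult_assoc, Rinv_l, Rmult_1_r in HM2 by lra.
      assert (M * eps < t * eps) by (apply Rmult_lt_compat_r; lra). lra. }
    assert (HEt : E y / t >= T / t * (1 - INR K * del)).
    { unfold Rdiv. apply Rle_ge. apply (Rmult_le_reg_r t); auto.
      replace (T * / t * (1 - INR K * del) * t) with (T * (1 - INR K * del)) by (field; lra).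
      rewrite Rmult_assoc, Rinv_l, Rmult_1_r by lra. auto. }
    rewrite HTt in HEt.
    assert (0 <= L * c2 / t) by (apply Rmult_le_pos; [apply Rmult_le_pos|left; apply Rinv_0_lt_compat]; lra).
    assert ((L - L * c2 / t) * (1 - INR K * del) >= L - INR K * del * L - L * c2 / t).
    { assert ((L * c2 / t) * (1 - INR K * del) <= L * c2 / t).
      { assert (0 <= L * c2 / t * (INR K * del)) by (apply Rmult_le_pos; [lra|]; apply Rmult_le_pos; lra). nra. }
      nra. }
    lra.
Qed.

Lemma lim_plus (f g : R -> R) (a b : R) :
  filterlim f (at_left 1) (locally a) -> filterlim g (at_left 1) (locally b) ->
  filterlim (fun x => f x + g x) (at_left 1) (locally (a + b)).
Proof.
  intros Hf Hg.
  apply (filterlim_comp_2 f g Rplus Hf Hg).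
  apply (@filterlim_plus R_AbsRing R_NormedModule a b).
Qed.

Lemma lim_scal (f : R -> R) (c a : R) :
  filterlim f (at_left 1) (locally a) ->
  filterlim (fun x => c * f x) (at_left 1) (locally (c * a)).
Proof.
  intros Hf. apply (filterlim_comp _ _ _ f (fun z => c * z) _ (locally a) _ Hf).
  apply (@filterlim_scal_r R_AbsRing R_NormedModule c a).
Qed.

Lemma lim_sumR (n : nat) (p : nat -> R) (g : nat -> R -> R) (L : R) :
  (forall i, (i < n)%nat -> filterlim (g i) (at_left 1) (locally L)) ->
  filterlim (fun x => sumR n (fun i => p i * g i x)) (at_left 1) (locally (sumR n (fun i => p i * L))).
Proof.
  induction n as [|n IH]; intros H; simpl.
  - apply filterlim_const.
  - apply lim_plus. apply IH. intros; apply H; lia. apply lim_scal. apply H; lia.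
Qed.

Lemma lim_inv_ln : filterlim (fun lam => - 1 / ln (1 - lam)) (at_left 1) (locally 0).
Proof.
  apply (proj2 (@filterlim_locally R R_UniformSpace (at_left 1) _ _ _)).
  intros [eps Heps]. simpl.
  set (M := / eps).
  assert (HM : 0 < M) by (apply Rinv_0_lt_compat; auto).
  assert (HeM : 0 < exp (- M)) by apply exp_pos.
  exists (mkposreal _ HeM). intros y Hy Hy1. simpl in Hy.
  change (Rabs (y - 1) < exp (- M)) in Hy. apply Rabs_def2 in Hy.
  assert (Ht := t_large y M Hy1 ltac:(lra)).
  change (Rabs (- 1 / ln (1 - y) - 0) < eps).
  set (t := - ln (1 - y)) in *.
  assert (Hl : ln (1 - y) = - t) by (unfold t; ring).
  rewrite Hl. replace (- 1 / - t - 0) with (/ t) by (field; lra).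
  rewrite Rabs_right by (left; apply Rinv_0_lt_compat; lra).
  replace eps with (/ M) by (unfold M; field; lra).
  apply Rinv_lt_contravar; auto. apply Rmult_lt_0_compat; lra.
Qed.

Lemma exK (n : nat) (d : nat -> nat) : exists K, (1 <= K)%nat /\ forall i, (i < n)%nat -> (d i <= K)%nat.
Proof.
  induction n as [|n [K [HK H]]].
  - exists 1%nat. split. lia. intros; lia.
  - exists (Nat.max K (d n)). split. lia. intros i Hi.
    destruct (Nat.eq_dec i n). subst; lia. assert (d i <= K)%nat by (apply H; lia). lia.
Qed.

Theorem theorem4p3 (n : nat) (p : nat -> R) (d : nat -> nat)
  (Fbar : R -> R -> R) :
  (forall i, (i < n)%nat -> 0 <= p i) ->
  sumR n p = 1 ->
  (forall i, (i < n)%nat -> (1 <= d i)%nat) ->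
  sumR n (fun i => p i * INR (d i)) > 1 ->
  (forall lam, 0 < lam < 1 -> solves_ode n p d lam (Fbar lam)) ->
  let L := / (sumR n (fun i => p i * INR (d i)) - 1) in
  (forall i, (i < n)%nat ->
     filterlim (fun lam => - ERi (Fbar lam) (d i) / ln (1 - lam))
       (at_left 1) (locally L) /\
     filterlim (fun lam => - EWi (Fbar lam) (d i) / ln (1 - lam))
       (at_left 1) (locally L)) /\
  filterlim (fun lam => - ER n p d (Fbar lam) / ln (1 - lam))
    (at_left 1) (locally L) /\
  filterlim (fun lam => - EW n p d (Fbar lam) / ln (1 - lam))
    (at_left 1) (locally L).
Proof.
  intros Hp Hs Hd Hm Hsol L.
  destruct (exK n d) as [K [HK HdK]].
  assert (HH : HypP n p d K).
  { unfold HypP. refine (conj Hp (conj Hs (conj _ (conj HK Hm)))). intros i Hi; split; auto. }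
  assert (HW : forall i, (i < n)%nat ->
     filterlim (fun lam => - EWi (Fbar lam) (d i) / ln (1 - lam)) (at_left 1) (locally L)).
  { intros i Hi. unfold L.
    apply (asym (mm n p d) K (d i) (fun lam => EWi (Fbar lam) (d i)) Hm HK (conj (Hd i Hi) (HdK i Hi))).
    - intros lam ep Hl He. apply (EW_upper_explicit n p d K lam (Fbar lam) (d i) ep HH Hl (Hsol lam Hl)); auto.
    - intros lam del T Hl Hdl HT Hc.
      apply (EW_lower_explicit n p d K lam (Fbar lam) (d i) del T HH Hl (Hsol lam Hl)); auto. }
  assert (HR1 : forall (E : R -> R), filterlim (fun lam => - E lam / ln (1 - lam)) (at_left 1) (locally L) ->
             filterlim (fun lam => - (1 + E lam) / ln (1 - lam)) (at_left 1) (locally L)).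
  { intros E HE. replace L with (L + 0) by ring.
    apply (filterlim_ext (fun lam => - E lam / ln (1 - lam) + - 1 / ln (1 - lam))).
    intros; unfold Rdiv; ring.
    apply lim_plus; auto. apply lim_inv_ln. }
  assert (HEW : filterlim (fun lam => - EW n p d (Fbar lam) / ln (1 - lam)) (at_left 1) (locally L)).
  { assert (Hsum : sumR n (fun i => p i * L) = L).
    { rewrite (sumR_ext n _ (fun i => L * p i)) by (intros; ring). rewrite sumR_scal, Hs. ring. }
    rewrite <- Hsum.
    apply (filterlim_ext (fun lam => sumR n (fun i => p i * (- EWi (Fbar lam) (d i) / ln (1 - lam))))).
    - intros lam. unfold EW. unfold Rdiv.
      rewrite (sumR_ext n _ (fun i => (- / ln (1 - lam)) * (p i * EWi (Fbar lam) (d i)))) by (intros; ring).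
      rewrite sumR_scal. ring.
    - apply (lim_sumR n p (fun i lam => - EWi (Fbar lam) (d i) / ln (1 - lam)) L). auto. }
  split; [|split].
  - intros i Hi. split; auto. unfold ERi. apply (HR1 (fun lam => EWi (Fbar lam) (d i))). auto.
  - unfold ER. apply (HR1 (fun lam => EW n p d (Fbar lam))). auto.
  - auto.
Qed.
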